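(* Let $C \subset \mathbb{R}^n$ be convex and closed with nonempty interior, and let $h\colon C\to\mathbb{R}$ be Legendre on $C$, continuous on $C$, and satisfy condition (B): for every sequence $(x_k)_{k\in\mathbb{N}} \subset \mathrm{int}\, C$ and every $y \in C$, if $x_k \to y$ then $D_h(y,x_k) \to 0$. Let $x \in \mathrm{bd}\, C$ and $y \in C$ be such that $\frac{x+y}{2} \in \mathrm{int}\, C$. Then $D_h\big(y, (1-\lambda)x + \lambda y\big) \to +\infty$ as $\lambda \to 0^+$.
   Context: A convex function $h \colon C \to \mathbb{R}$ on a convex set $C\subset\mathbb{R}^n$ with nonempty interior is called Legendre if (1) $h$ is continuously differentiable on $\mathrm{int}\, C$ and $\|\nabla h(x)\| \to +\infty$ whenever $x \in \mathrm{int}\, C$ approaches a point of the boundary of $C$; and (2) $h$ is strictly convex on $\mathrm{int}\, C$. The Bregman divergence is $D_h(y,x) = h(y) - h(x) - \langle \nabla h(x), y - x\rangle$ for $y \in C$, $x \in \mathrm{int}\, C$. $\mathrm{bd}\, C$ denotes the boundary of $C$. *)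

(* Defs.v *)
From HB Require Import structures.
From mathcomp Require Import all_boot all_order all_algebra.
From mathcomp Require Import all_classical all_reals all_analysis.
Set Implicit Arguments. Unset Strict Implicit. Unset Printing Implicit Defensive.
Import Order.TTheory GRing.Theory Num.Theory.
Import numFieldNormedType.Exports.
Local Open Scope classical_set_scope.
Local Open Scope ring_scope.

Section Defs.
Context {R : realType} {n : nat}.
Implicit Types (C : set 'rV[R]_n) (h : 'rV[R]_n -> R).

Definition convex_setR C := forall x y t, C x -> C y -> 0 <= t <= 1 ->
  C ((1 - t) *: x + t *: y).

Definition convex_on C h := forall x y t, C x -> C y -> 0 <= t <= 1 ->
  h ((1 - t) *: x + t *: y) <= (1 - t) * h x + t * h y.

Definition strictly_convex_on (A : set 'rV[R]_n) h := forall x y t,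
  A x -> A y -> x != y -> 0 < t < 1 ->
  h ((1 - t) *: x + t *: y) < (1 - t) * h x + t * h y.

Definition bd C := closure C `\` interior C.

Definition inner (u v : 'rV[R]_n) : R := \sum_(i < n) u 0 i * v 0 i.
Definition enorm (u : 'rV[R]_n) : R := Num.sqrt (inner u u).

Definition grad h (x : 'rV[R]_n) : 'rV[R]_n :=
  \row_(i < n) 'D_(delta_mx 0 i) h x.

Definition bregman h (y x : 'rV[R]_n) : R :=
  h y - h x - inner (grad h x) (y - x).

Definition legendre C h :=
  convex_on C h /\
  (forall x, interior C x -> differentiable h x) /\
  (forall x, interior C x -> {for x, continuous (grad h)}) /\
  (* ||grad h x|| -> +oo as x in int C approaches a boundary point *)
  (forall z, bd C z -> forall M : R,
     \forall x \near z, interior C x -> M < enorm (grad h x)) /\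
  strictly_convex_on (interior C) h.

Definition condB C h := forall (u : nat -> 'rV[R]_n) (y : 'rV[R]_n),
  (forall k, interior C (u k)) -> C y -> u @ \oo --> y ->
  (fun k => bregman h y (u k)) @ \oo --> 0.

End Defs.

(* Main.v *)
Require Import Defs.
From HB Require Import structures.
From mathcomp Require Import all_boot all_order all_algebra.
From mathcomp Require Import all_classical all_reals all_analysis.
From mathcomp Require Import ring lra.
Import Order.TTheory GRing.Theory Num.Theory.
Import numFieldNormedType.Exports.
Local Open Scope classical_set_scope.
Local Open Scope ring_scope.


Lemma right_sub_dnbhs (R : realType) : (0^'+ : set_system R) `=>` 0^'.
Proof.
move=> P /=. rewrite /dnbhs /within /= => H.
apply: filterS H => t H t0; apply: H; exact: lt0r_neq0.
Qed.

Lemma D_inner (R : realType) (n : nat) (h : 'rV[R]_n -> R) z v :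
  differentiable h z -> 'D_v h z = inner (grad h z) v.
Proof.
move=> dh; rewrite deriveE // {1}(row_sum_delta v) linear_sum /inner.
apply: eq_bigr => i _; rewrite linearZ /= mxE deriveE //.
by rewrite mulrC.
Qed.

Lemma first_order (R : realType) (n : nat) (C : set 'rV[R]_n) (h : 'rV[R]_n -> R) z w :
  convex_on C h -> interior C z -> C w -> differentiable h z ->
  h z + inner (grad h z) (w - z) <= h w.
Proof.
move=> cvx iz Cw dh.
have Cz : C z by exact: interior_subset.
rewrite -D_inner //.
have := diff_derivable (v := w - z) dh.
rewrite /derivable => /cvg_ex[l Hl].
have -> : 'D_(w - z) h z = l by exact: cvg_lim.
have Hr : (fun t : R => t^-1 *: ((h \o shift z) (t *: (w - z)) - h z)) @ 0^'+ --> l.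
  by move=> P /Hl; apply: right_sub_dnbhs.
rewrite addrC -lerBrDr.
apply: (cvgr_to_le Hr).
near=> t.
have t0 : 0 < t by near: t; exact: nbhs_right_gt.
have t1 : t <= 1 by near: t; apply: nbhs_right_ltW; exact: ltr01.
have E : t *: (w - z) + z = (1-t) *: z + t *: w.
  by rewrite scalerBr scalerBl scale1r addrAC [RHS]addrAC [z + _]addrC.
have H := cvx z w t Cz Cw (introT andP (conj (ltW t0) t1)).
rewrite /= E.
change (t^-1 * (h ((1 - t) *: z + t *: w) - h z) <= h w - h z).
rewrite ler_pdivrMl //.
nra.
Unshelve. all: by end_near.
Qed.


Lemma seg_interior (R : realType) (n : nat) (C : set 'rV[R]_n) x m t :
  convex_setR C -> C x -> interior C m -> 0 < t <= 1 ->
  interior C ((1 - t) *: x + t *: m).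
Proof.
move=> cvx Cx /nbhs_ballP[e e0 sub] /andP[t0 t1].
apply/nbhs_ballP; exists (t * e); first by apply: mulr_gt0.
move=> w; rewrite -ball_normE /= => hw.
pose u := t^-1 *: (w - (1 - t) *: x).
have Cu : C u.
  apply: sub; rewrite -ball_normE /=.
  have -> : m - u = t^-1 *: ((1 - t) *: x + t *: m - w).
    rewrite /u scalerBr scalerBr !scalerDr !scalerA mulVf ?gt_eqF // scale1r.
    by rewrite opprB addrA [m + _]addrC.
  rewrite normrZ ger0_norm ?invr_ge0 ?ltW //.
  by rewrite ltr_pdivrMl.
have -> : w = (1 - t) *: x + t *: u.
  by rewrite /u scalerA mulfV ?gt_eqF // scale1r addrC subrK.
apply: cvx => //; rewrite t1 andbT; exact: ltW.
Qed.


Section H.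
Context {R : realType} {n : nat}.

Lemma inner_addr (u v w : 'rV[R]_n) : inner u (v + w) = inner u v + inner u w.
Proof. by rewrite /inner -big_split /=; apply: eq_bigr => i _; rewrite mxE mulrDr. Qed.

Lemma inner_scaler (u v : 'rV[R]_n) a : inner u (a *: v) = a * inner u v.
Proof. by rewrite /inner mulr_sumr; apply: eq_bigr => i _; rewrite mxE mulrCA. Qed.

Lemma inner_delta (u : 'rV[R]_n) i : inner u (delta_mx 0 i) = u 0 i.
Proof.
rewrite /inner (bigD1 i) //= mxE !eqxx mulr1 big1 ?addr0 // => j ji.
by rewrite mxE eqxx /= (negbTE ji) mulr0.
Qed.

Lemma norm_delta (i : 'I_n) : `|delta_mx 0 i : 'rV[R]_n| <= 1.
Proof.
have -> : `|delta_mx 0 i : 'rV[R]_n| = mx_norm (delta_mx 0 i : 'rV[R]_n) by [].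
rewrite mx_normrE; elim/big_ind: _ => //.
- by move=> a b ha hb; rewrite ge_max ha hb.
- by move=> [a b] _ /=; rewrite mxE; case: (_ && _); rewrite ?normr1 ?normr0.
Qed.

Lemma enorm_le_sum (g : 'rV[R]_n) : enorm g <= \sum_(i < n) `|g 0 i|.
Proof.
have [H1 H2] : 0 <= \sum_(i < n) `|g 0 i| /\
   inner g g <= (\sum_(i < n) `|g 0 i|) ^+ 2.
  rewrite /inner; elim/big_rec2: _ => [|i a b _ [b0 ab]]; first by rewrite expr0n /=.
  split; first by rewrite addr_ge0.
  have : 0 <= `|g 0 i| by [].
  have : g 0 i * g 0 i = `|g 0 i| ^+ 2 by rewrite real_normK ?num_real // expr2.
  nra.
rewrite /enorm -(ger0_norm H1) -sqrtr_sqr ler_sqrt //.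
exact: sqr_ge0.
Qed.

End H.

Theorem lemma1 (R : realType) (n : nat) (C : set 'rV[R]_n) (h : 'rV[R]_n -> R)
  (x y : 'rV[R]_n) :
  convex_setR C -> closed C -> interior C !=set0 ->
  legendre C h -> {within C, continuous h} -> condB C h ->
  bd C x -> C y -> interior C ((2^-1) *: (x + y)) ->
  (fun l : R => bregman h y ((1 - l) *: x + l *: y)) @ 0^'+ --> +oo.
Proof.
move=> cvx clC _ [hconv [hdiff [_ [hbd _]]]] hcont _ bx Cy im.
have Cx : C x by case: bx => cx _; rewrite ((closure_id C).1 clC).
set m := 2^-1 *: (x + y).
have im' := im.
move: im' => /nbhs_ballP[e e0 sub].
pose r := e / 2.
have r0 : 0 < r by rewrite /r divr_gt0.
pose z l := (1 - l) *: x + l *: y.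
have zint : forall l, 0 < l <= 2^-1 -> interior C (z l).
  move=> l /andP[l0 l1].
  have -> : z l = (1 - 2 * l) *: x + (2 * l) *: m.
    apply/rowP => j; rewrite !mxE; by field.
  apply: seg_interior => //; apply/andP; split; lra.
have zx : z l @[l --> 0^'+] --> x.
  apply: cvg_at_right_filter.
  rewrite [X in _ --> X](_ : x = (1 - 0) *: x + 0 *: y); last first.
    by rewrite subr0 scale1r scale0r addr0.
  apply: cvgD; apply: cvgZ; try exact: cvg_cst; try exact: cvg_id.
  apply: cvgB; [exact: cvg_cst | exact: cvg_id].
have hxc := (@subspace_continuousP _ C _ h).1 hcont x Cx.
move/cvgrPdist_lt: hxc => /(_ 1 ltr01) hxc.
rewrite near_withinE in hxc.
pose A := \sum_(i < n) (`|h (m + r *: delta_mx 0 i)| + `|h (m + (- r) *: delta_mx 0 i)|).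
apply/cvgryPge => B.
pose K := `|B - h y| + `|h x| + 1.
pose N : R := n%:R.
pose T := (A + N * K) / r + 1.
have hT := hbd x bx T.
near=> l.
have l0 : 0 < l by near: l; exact: nbhs_right_gt.
have l1 : l < 4^-1 by near: l; apply: nbhs_right_lt; rewrite invr_gt0.
have iz : interior C (z l) by apply: zint; apply/andP; split; lra.
have Cz := interior_subset iz.
have hz : C (z l) -> `|h x - h (z l)| < 1.
  by near: l; exact: (zx _ hxc).
have gT : interior C (z l) -> T < enorm (grad h (z l)).
  by near: l; exact: (zx _ hT).
move: (hz Cz) (gT iz) => {}hz {}gT.
set g := grad h (z l).
set a := inner g (y - x).
have Emz : m - z l = (2^-1 - l) *: (y - x).
  by apply/rowP => j; rewrite !mxE; by field.
have key : forall i : 'I_n, h (z l) + (2^-1 - l) * a + r * `|g 0 i| <=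
    `|h (m + r *: delta_mx 0 i)| + `|h (m + (- r) *: delta_mx 0 i)|.
  move=> i.
  pose c := if 0 <= g 0 i then r else - r.
  have Cw : C (m + c *: delta_mx 0 i).
    apply: sub; rewrite -ball_normE /= opprD addrA subrr add0r normrN normrZ.
    have nd := norm_delta (R:=R) i.
    have -> : `|c| = r by rewrite /c; case: ifP => _; rewrite ?normrN gtr0_norm.
    have : r * `|delta_mx 0 i : 'rV[R]_n| <= r * 1 by rewrite ler_pM2l.
    have e0' : 0 < e := e0. rewrite /r; lra.
  have fo := @first_order R n C h (z l) _ hconv iz Cw (hdiff _ iz).
  have E : m + c *: delta_mx 0 i - z l = (2^-1 - l) *: (y - x) + c *: delta_mx 0 i.
    by rewrite addrAC Emz.
  rewrite E inner_addr !inner_scaler inner_delta in fo.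
  have cg : c * g 0 i = r * `|g 0 i|.
    rewrite /c; case: ifP => g0; first by rewrite ger0_norm.
    by rewrite ltr0_norm ?mulrN ?mulNr // ltNge g0.
  rewrite -/g -/a in fo; move: fo; rewrite /c; case: ifP => g0 fo.
    have := ler_norm (h (m + r *: delta_mx 0 i)).
    have := normr_ge0 (h (m + (- r) *: delta_mx 0 i)).
    rewrite /c g0 in cg; lra.
  have := ler_norm (h (m + (- r) *: delta_mx 0 i)).
  have := normr_ge0 (h (m + r *: delta_mx 0 i)).
  rewrite /c g0 in cg; lra.
have S1 : \sum_(i < n) (h (z l) + (2^-1 - l) * a + r * `|g 0 i|) <= A.
  by apply: ler_sum => i _; exact: key.
rewrite big_split /= sumr_const card_ord -mulr_sumr -mulr_natr in S1.
have Sge := enorm_le_sum g.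
have rS : A + N * K + r < r * \sum_(i < n) `|g 0 i|.
  have : T < \sum_(i < n) `|g 0 i| by lra.
  rewrite /T => H.
  have : r * ((A + N * K) / r + 1) < r * \sum_(i < n) `|g 0 i| by rewrite ltr_pM2l.
  rewrite mulrDr mulrCA mulfV ?gt_eqF // mulr1 mulr1 //.
have N0 : 0 <= N by rewrite /N.
have hPhi : h (z l) + (2^-1 - l) * a + K < 0.
  rewrite ltNge; apply/negP => H.
  have : 0 <= N * (h (z l) + (2^-1 - l) * a + K) by apply: mulr_ge0.
  rewrite -/N in S1.
  nra.
have Eyz : y - z l = (1 - l) *: (y - x).
  by apply/rowP => j; rewrite !mxE; by field.
rewrite /bregman -/(z l) -/g Eyz inner_scaler -/a.
have hB := ler_norm (B - h y).
have hB0 := normr_ge0 (B - h y).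
have hzz := ler_norm (h x - h (z l)).
have := ler_norm (- h x); rewrite normrN => hx.
have b0 : a <= 0.
  rewrite leNgt; apply/negP => a0.
  have : 0 < (2^-1 - l) * a by apply: mulr_gt0; lra.
  rewrite /K in hPhi; lra.
have := normr_ge0 (h x); rewrite /K in hPhi; lra.
Unshelve. all: by end_near.
Qed.
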